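(* Let $\Gamma$ be a regular axis-parallel square grid in the plane whose squares have diameter $1$ (side length $1/\sqrt{2}$), and call the open squares of $\Gamma$ cells. Let $p$ and $q$ be two points lying in different cells $\pi_p$ and $\pi_q$, and let $D(p,q)$ be the closed disk having segment $pq$ as a diameter. Let $X$ be the set of cells consisting of $\pi_p$, $\pi_q$, and all $+$-neighbors of $\pi_p$ and of $\pi_q$. 1. If $|pq|\le 1$, then $D(p,q)$ does not intersect any cell outside the neighborhoods of $\pi_p$ and $\pi_q$. 2. If $|pq|\le 1$, then $D(p,q)$ intersects at most two cells that are not in $X$. 3. If $|pq|\le 1/\sqrt{2}$, then $D(p,q)$ does not intersect any cell that is not in $X$.
   Context: The neighbors of a cell $\pi$ are the eight cells that share a side or a corner with $\pi$; the $+$-neighbors of $\pi$ are the four cells sharing a side with $\pi$. The neighborhood of $\pi$ consists of $\pi$ together with its eight neighbors. Cells are open (they do not contain their boundary), and disks are closed. *)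

(* Defs.v *)
From Stdlib Require Import Reals Lra Lia ZArith List.
Open Scope R_scope.

Definition point := (R * R)%type.

Definition pdist (p q : point) : R :=
  sqrt ((fst p - fst q) ^ 2 + (snd p - snd q) ^ 2).

(* Side length of the grid squares: squares have diameter 1. *)
Definition side : R := 1 / sqrt 2.

(* A cell is indexed by (i,j) : Z*Z; the grid has an arbitrary origin (ox,oy).
   Cell (i,j) is the OPEN square (ox + i*side, ox + (i+1)*side) x
   (oy + j*side, oy + (j+1)*side). *)
Definition cell := (Z * Z)%type.

Definition in_cell (ox oy : R) (c : cell) (x : point) : Prop :=
  ox + IZR (fst c) * side < fst x < ox + (IZR (fst c) + 1) * side /\
  oy + IZR (snd c) * side < snd x < oy + (IZR (snd c) + 1) * side.

Definition in_diam_disk (p q x : point) : Prop :=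
  pdist x ((fst p + fst q) / 2, (snd p + snd q) / 2) <= pdist p q / 2.

Definition disk_meets (ox oy : R) (p q : point) (c : cell) : Prop :=
  exists x, in_diam_disk p q x /\ in_cell ox oy c x.

Definition in_nbhd (c c' : cell) : Prop :=
  (Z.abs (fst c - fst c') <= 1)%Z /\ (Z.abs (snd c - snd c') <= 1)%Z.

Definition plus_nbr (c c' : cell) : Prop :=
  (Z.abs (fst c - fst c') + Z.abs (snd c - snd c') = 1)%Z.

Definition in_X (cp cq c : cell) : Prop :=
  c = cp \/ c = cq \/ plus_nbr cp c \/ plus_nbr cq c.

(* Main.v *)
Require Import Defs.
From Stdlib Require Import Reals Lra Lia ZArith List Bool Setoid.
Open Scope Z_scope.

Definition okP (di dj a b : Z) : Prop :=
  ((Z.min 0 di <= a /\ a <= Z.max 0 di) \/ (Z.min 0 dj <= b /\ b <= Z.max 0 dj)) /\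
  (Z.abs a <= 2 /\ Z.abs b <= 2 /\ Z.abs (a-di) <= 2 /\ Z.abs (b-dj) <= 2) /\
  ((Z.abs a < 2 \/ Z.abs b < 2) /\ (Z.abs a < 2 \/ Z.abs (a-di) < 2) /\
   (Z.abs a < 2 \/ Z.abs (b-dj) < 2) /\ (Z.abs b < 2 \/ Z.abs (a-di) < 2) /\
   (Z.abs b < 2 \/ Z.abs (b-dj) < 2) /\ (Z.abs (a-di) < 2 \/ Z.abs (b-dj) < 2)) /\
  ((a <> 0 \/ b <> 0) /\ (a <> di \/ b <> dj) /\ Z.abs a + Z.abs b <> 1 /\
   Z.abs (a-di) + Z.abs (b-dj) <> 1).

Definition okb (di dj a b : Z) : bool :=
  (((Z.min 0 di <=? a) && (a <=? Z.max 0 di)) || ((Z.min 0 dj <=? b) && (b <=? Z.max 0 dj))) &&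
  ((Z.abs a <=? 2) && (Z.abs b <=? 2) && (Z.abs (a-di) <=? 2) && (Z.abs (b-dj) <=? 2)) &&
  (((Z.abs a <? 2) || (Z.abs b <? 2)) && ((Z.abs a <? 2) || (Z.abs (a-di) <? 2)) &&
   ((Z.abs a <? 2) || (Z.abs (b-dj) <? 2)) && ((Z.abs b <? 2) || (Z.abs (a-di) <? 2)) &&
   ((Z.abs b <? 2) || (Z.abs (b-dj) <? 2)) && ((Z.abs (a-di) <? 2) || (Z.abs (b-dj) <? 2))) &&
  ((negb (a =? 0) || negb (b =? 0)) && (negb (a =? di) || negb (b =? dj)) &&
   negb (Z.abs a + Z.abs b =? 1) && negb (Z.abs (a-di) + Z.abs (b-dj) =? 1)).

Ltac bconv := repeat (rewrite ?andb_true_iff, ?orb_true_iff, ?negb_true_iff, ?Z.leb_le,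
  ?Z.ltb_lt, ?Z.eqb_neq).

Lemma okP_b di dj a b : okP di dj a b -> okb di dj a b = true.
Proof. unfold okP, okb. bconv. intros H. decompose [and] H. repeat split; assumption. Qed.

Definition prP (a b a' b' : Z) : Prop :=
  Z.abs (a-a') <= 2 /\ Z.abs (b-b') <= 2 /\ (Z.abs (a-a') < 2 \/ Z.abs (b-b') < 2).
Definition prb (a b a' b' : Z) : bool :=
  (Z.abs (a-a') <=? 2) && (Z.abs (b-b') <=? 2) && ((Z.abs (a-a') <? 2) || (Z.abs (b-b') <? 2)).
Lemma prP_b a b a' b' : prP a b a' b' -> prb a b a' b' = true.
Proof. unfold prP, prb. bconv. intros H. decompose [and] H. repeat split; assumption. Qed.

Definition dlP (di dj : Z) : Prop :=
  Z.abs di <= 2 /\ Z.abs dj <= 2 /\ (Z.abs di < 2 \/ Z.abs dj < 2) /\ (di <> 0 \/ dj <> 0).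
Definition dlb (di dj : Z) : bool :=
  (Z.abs di <=? 2) && (Z.abs dj <=? 2) && ((Z.abs di <? 2) || (Z.abs dj <? 2)) &&
  (negb (di =? 0) || negb (dj =? 0)).
Lemma dlP_b di dj : dlP di dj -> dlb di dj = true.
Proof. unfold dlP, dlb. bconv. intros H. decompose [and] H. repeat split; assumption. Qed.

Definition nq (a b a' b' : Z) : bool := negb (a =? a') || negb (b =? b').

Definition rng : list Z := -2 :: -1 :: 0 :: 1 :: 2 :: nil.
Definition allr (f : Z -> bool) : bool := forallb f rng.
Lemma allr_spec f : allr f = true -> forall z, -2 <= z <= 2 -> f z = true.
Proof.
  unfold allr, rng; simpl. intros H z Hz.
  rewrite !andb_true_iff in H.
  assert (z = -2 \/ z = -1 \/ z = 0 \/ z = 1 \/ z = 2) by lia.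
  intuition congruence.
Qed.

Definition cond di dj a1 b1 a2 b2 a3 b3 : bool :=
  dlb di dj && okb di dj a1 b1 && okb di dj a2 b2 && okb di dj a3 b3 &&
  prb a1 b1 a2 b2 && prb a1 b1 a3 b3 && prb a2 b2 a3 b3 &&
  nq a1 b1 a2 b2 && nq a1 b1 a3 b3 && nq a2 b2 a3 b3.

Definition check : bool :=
  allr (fun di => allr (fun dj => allr (fun a1 => allr (fun b1 =>
  if okb di dj a1 b1 then
  allr (fun a2 => allr (fun b2 => allr (fun a3 => allr (fun b3 =>
    negb (cond di dj a1 b1 a2 b2 a3 b3)))))
  else true)))).

Lemma check_ok : check = true.
Proof. vm_compute. reflexivity. Qed.

Lemma count_rel di dj a1 b1 a2 b2 a3 b3 :
  dlP di dj -> okP di dj a1 b1 -> okP di dj a2 b2 -> okP di dj a3 b3 ->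
  prP a1 b1 a2 b2 -> prP a1 b1 a3 b3 -> prP a2 b2 a3 b3 ->
  (a1 <> a2 \/ b1 <> b2) -> (a1 <> a3 \/ b1 <> b3) -> (a2 <> a3 \/ b2 <> b3) -> False.
Proof.
  intros Hd H1 H2 H3 P12 P13 P23 N12 N13 N23.
  assert (R1 : -2 <= a1 <= 2 /\ -2 <= b1 <= 2) by (destruct H1 as [_ [[? [? _]] _]]; lia).
  assert (R2 : -2 <= a2 <= 2 /\ -2 <= b2 <= 2) by (destruct H2 as [_ [[? [? _]] _]]; lia).
  assert (R3 : -2 <= a3 <= 2 /\ -2 <= b3 <= 2) by (destruct H3 as [_ [[? [? _]] _]]; lia).
  assert (RD : -2 <= di <= 2 /\ -2 <= dj <= 2) by (destruct Hd as [? [? _]]; lia).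
  assert (C : cond di dj a1 b1 a2 b2 a3 b3 = true).
  { unfold cond. apply dlP_b in Hd. apply okP_b in H1, H2, H3.
    apply prP_b in P12, P13, P23. rewrite Hd, H1, H2, H3, P12, P13, P23.
    unfold nq. bconv. repeat split; try reflexivity; assumption. }
  pose proof check_ok as K. unfold check in K.
  destruct R1, R2, R3, RD.
  assert (K1 := allr_spec _ K di ltac:(lia)). clear K.
  assert (K2 := allr_spec _ K1 dj ltac:(lia)). clear K1.
  assert (K3 := allr_spec _ K2 a1 ltac:(lia)). clear K2.
  assert (K4 := allr_spec _ K3 b1 ltac:(lia)). clear K3.
  cbv beta in K4. apply okP_b in H1. rewrite H1 in K4.
  assert (K5 := allr_spec _ K4 a2 ltac:(lia)). clear K4.
  assert (K6 := allr_spec _ K5 b2 ltac:(lia)). clear K5.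
  assert (K7 := allr_spec _ K6 a3 ltac:(lia)). clear K6.
  assert (K8 := allr_spec _ K7 b3 ltac:(lia)). clear K7.
  cbv beta in K8. rewrite C in K8. discriminate.
Qed.

Close Scope Z_scope.
Open Scope R_scope.

Lemma zle_R (x y n : Z) : (x + n <= y)%Z -> IZR x + IZR n <= IZR y.
Proof. intros H. apply IZR_le in H. rewrite plus_IZR in H. exact H. Qed.

Lemma gap (i k : Z) (a b : R) :
  IZR i < a < IZR i + 1 -> IZR k < b < IZR k + 1 ->
  ((2 <= Z.abs (k - i))%Z -> 1 < (b-a)^2) /\ ((3 <= Z.abs (k - i))%Z -> 4 < (b-a)^2).
Proof.
  intros Ha Hb. split; intros H.
  - destruct (Z.le_gt_cases 0 (k - i)).
    + assert (H1 : (i + 2 <= k)%Z) by lia. apply zle_R in H1.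
      assert (1 < b - a) by lra. nra.
    + assert (H1 : (k + 2 <= i)%Z) by lia. apply zle_R in H1.
      assert (1 < a - b) by lra. nra.
  - destruct (Z.le_gt_cases 0 (k - i)).
    + assert (H1 : (i + 3 <= k)%Z) by lia. apply zle_R in H1.
      assert (2 < b - a) by lra. nra.
    + assert (H1 : (k + 3 <= i)%Z) by lia. apply zle_R in H1.
      assert (2 < a - b) by lra. nra.
Qed.

Lemma trich (i k : Z) (a b : R) :
  IZR i < a < IZR i + 1 -> IZR k < b < IZR k + 1 ->
  (Z.abs (k - i) < 2)%Z \/ ((Z.abs (k - i) = 2)%Z /\ 1 < (b-a)^2)
  \/ ((3 <= Z.abs (k - i))%Z /\ 4 < (b-a)^2).
Proof.
  intros Ha Hb. destruct (gap i k a b Ha Hb) as [G2 G3].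
  destruct (Z.lt_ge_cases (Z.abs (k - i)) 2); [left; auto|].
  destruct (Z.le_gt_cases 3 (Z.abs (k - i))).
  - right; right. split; auto.
  - right; left. split; [lia| apply G2; lia].
Qed.

Definition tri (z : Z) (s : R) : Prop :=
  (z < 2)%Z \/ ((z = 2)%Z /\ 1 < s) \/ ((3 <= z)%Z /\ 4 < s).

Lemma tri_of (i k : Z) (a b : R) :
  IZR i < a < IZR i + 1 -> IZR k < b < IZR k + 1 -> tri (Z.abs (k - i)) ((b-a)^2).
Proof. intros. unfold tri. apply trich; auto. Qed.

Lemma two_tri z1 z2 s1 s2 : 0 <= s1 -> 0 <= s2 -> s1 + s2 <= 2 ->
  tri z1 s1 -> tri z2 s2 -> (z1 <= 2 /\ z2 <= 2 /\ (z1 < 2 \/ z2 < 2))%Z.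
Proof. unfold tri. intros. destruct H2 as [?|[[? ?]|[? ?]]], H3 as [?|[[? ?]|[? ?]]];
  try lra; lia. Qed.

Lemma four_tri z1 z2 z3 z4 s1 s2 s3 s4 :
  0 <= s1 -> 0 <= s2 -> 0 <= s3 -> 0 <= s4 -> s1 + s2 + s3 + s4 <= 2 ->
  tri z1 s1 -> tri z2 s2 -> tri z3 s3 -> tri z4 s4 ->
  (z1 <= 2 /\ z2 <= 2 /\ z3 <= 2 /\ z4 <= 2)%Z /\
  ((z1 < 2 \/ z2 < 2) /\ (z1 < 2 \/ z3 < 2) /\ (z1 < 2 \/ z4 < 2) /\
   (z2 < 2 \/ z3 < 2) /\ (z2 < 2 \/ z4 < 2) /\ (z3 < 2 \/ z4 < 2))%Z.
Proof. unfold tri. intros.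
  destruct H4 as [?|[[? ?]|[? ?]]], H5 as [?|[[? ?]|[? ?]]],
    H6 as [?|[[? ?]|[? ?]]], H7 as [?|[[? ?]|[? ?]]]; try lra; lia. Qed.

Lemma one_tri z s : s <= 1 -> tri z s -> (z <= 1)%Z.
Proof. unfold tri. intros. destruct H0 as [?|[[? ?]|[? ?]]]; try lra; lia. Qed.

Lemma sign1 (i i2 k : Z) (a c b : R) :
  IZR i < a < IZR i + 1 -> IZR i2 < c < IZR i2 + 1 -> IZR k < b < IZR k + 1 ->
  (Z.min 0 (i2 - i) <= k - i /\ k - i <= Z.max 0 (i2 - i))%Z \/ 0 < (b - a) * (b - c).
Proof.
  intros Ha Hc Hb.
  destruct (Z.le_gt_cases (Z.min 0 (i2 - i)) (k - i));
  destruct (Z.le_gt_cases (k - i) (Z.max 0 (i2 - i))); auto; right.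
  - assert (H1 : (i + 1 <= k)%Z) by lia. assert (H2 : (i2 + 1 <= k)%Z) by lia.
    apply zle_R in H1, H2. apply Rmult_lt_0_compat; lra.
  - assert (H1 : (k + 1 <= i)%Z) by lia. assert (H2 : (k + 1 <= i2)%Z) by lia.
    apply zle_R in H1, H2. replace ((b-a)*(b-c)) with ((a-b)*(c-b)) by ring.
    apply Rmult_lt_0_compat; lra.
  - lia.
Qed.

Lemma sumsq (P1 P2 Q1 Q2 X1 X2 : R) :
  (X1-P1)*(X1-Q1)+(X2-P2)*(X2-Q2) <= 0 ->
  (X1-P1)^2 + (X2-P2)^2 + (X1-Q1)^2 + (X2-Q2)^2 <= (Q1-P1)^2 + (Q2-P2)^2.
Proof. intros. nra. Qed.

Lemma pairsq (P1 P2 Q1 Q2 X1 X2 Y1 Y2 : R) :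
  (X1-P1)*(X1-Q1)+(X2-P2)*(X2-Q2) <= 0 ->
  (Y1-P1)*(Y1-Q1)+(Y2-P2)*(Y2-Q2) <= 0 ->
  (X1-Y1)^2 + (X2-Y2)^2 <= (Q1-P1)^2 + (Q2-P2)^2.
Proof.
  intros. assert (0 <= (X1+Y1-P1-Q1)^2 + (X2+Y2-P2-Q2)^2) by (apply Rplus_le_le_0_compat; apply pow2_ge_0).
  assert (E : (X1-Y1)^2 + (X2-Y2)^2 = 2*((X1-P1)*(X1-Q1)+(X2-P2)*(X2-Q2))
     + 2*((Y1-P1)*(Y1-Q1)+(Y2-P2)*(Y2-Q2)) + ((Q1-P1)^2 + (Q2-P2)^2)
     - ((X1+Y1-P1-Q1)^2 + (X2+Y2-P2-Q2)^2)) by ring.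
  lra.
Qed.

Lemma side_pos : 0 < side.
Proof. unfold side. apply Rdiv_lt_0_compat; [lra|]. apply sqrt_lt_R0; lra. Qed.

Lemma side_sq : side * side = 1/2.
Proof.
  unfold side. assert (H := sqrt_sqrt 2 ltac:(lra)).
  assert (0 < sqrt 2) by (apply sqrt_lt_R0; lra).
  replace (1 / sqrt 2 * (1 / sqrt 2)) with (1 / (sqrt 2 * sqrt 2)) by (field; lra). rewrite H. reflexivity.
Qed.

Lemma div_lt_l (u v s : R) : 0 < s -> u * s < v -> u < v / s.
Proof. intros. apply Rmult_lt_reg_r with s; auto. replace (v / s * s) with v by (field; lra). lra. Qed.
Lemma div_lt_r (u v s : R) : 0 < s -> v < u * s -> v / s < u.
Proof. intros. apply Rmult_lt_reg_r with s; auto. replace (v / s * s) with v by (field; lra). lra. Qed.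

Lemma cell_n ox oy (c : cell) (x : point) : in_cell ox oy c x ->
  (IZR (fst c) < (fst x - ox) / side < IZR (fst c) + 1) /\
  (IZR (snd c) < (snd x - oy) / side < IZR (snd c) + 1).
Proof.
  unfold in_cell. pose proof side_pos. intros [[H1 H2] [H3 H4]].
  repeat split; [apply div_lt_l|apply div_lt_r|apply div_lt_l|apply div_lt_r]; auto; lra.
Qed.

Lemma sq_le_of_sqrt (a b : R) : 0 <= a -> 0 <= b -> sqrt a <= b -> a <= b * b.
Proof.
  intros Ha Hb H. rewrite <- (sqrt_sqrt a Ha).
  apply Rmult_le_compat; auto; apply sqrt_pos.
Qed.

Lemma disk_n ox oy (p q x : point) : in_diam_disk p q x ->
  ((fst x - ox)/side - (fst p - ox)/side) * ((fst x - ox)/side - (fst q - ox)/side) +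
  ((snd x - oy)/side - (snd p - oy)/side) * ((snd x - oy)/side - (snd q - oy)/side) <= 0.
Proof.
  unfold in_diam_disk, pdist. cbn [fst snd]. intros H.
  set (b := (fst p - fst q) ^ 2 + (snd p - snd q) ^ 2) in *.
  set (a := (fst x - (fst p + fst q) / 2) ^ 2 + (snd x - (snd p + snd q) / 2) ^ 2) in *.
  assert (Hb : 0 <= b) by (unfold b; apply Rplus_le_le_0_compat; apply pow2_ge_0).
  assert (Ha : 0 <= a) by (unfold a; apply Rplus_le_le_0_compat; apply pow2_ge_0).
  assert (Hsb : 0 <= sqrt b / 2) by (pose proof (sqrt_pos b); lra).
  apply sq_le_of_sqrt in H; auto.
  assert (E : sqrt b / 2 * (sqrt b / 2) = b / 4).
  { rewrite <- (sqrt_sqrt b Hb) at 3. field. }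
  rewrite E in H.
  pose proof side_pos as Hs.
  assert (E2 : ((fst x - ox)/side - (fst p - ox)/side) * ((fst x - ox)/side - (fst q - ox)/side) +
  ((snd x - oy)/side - (snd p - oy)/side) * ((snd x - oy)/side - (snd q - oy)/side)
  = (a - b/4) / (side * side)).
  { unfold a, b. field. lra. }
  rewrite E2.
  assert (0 < side * side) by nra.
  unfold Rdiv. assert (0 < / (side*side)) by (apply Rinv_0_lt_compat; auto). nra.
Qed.

Lemma dist_n ox oy (p q : point) (r : R) : 0 <= r -> pdist p q <= r ->
  ((fst q - ox)/side - (fst p - ox)/side)^2 + ((snd q - oy)/side - (snd p - oy)/side)^2 <= 2 * (r * r).
Proof.
  unfold pdist. intros Hr H.
  set (b := (fst p - fst q) ^ 2 + (snd p - snd q) ^ 2) in *.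
  assert (Hb : 0 <= b) by (unfold b; apply Rplus_le_le_0_compat; apply pow2_ge_0).
  assert (b <= r * r).
  { apply sq_le_of_sqrt in H; auto. }
  pose proof side_pos as Hs. pose proof side_sq as Hss.
  assert (E : ((fst q - ox)/side - (fst p - ox)/side)^2 + ((snd q - oy)/side - (snd p - oy)/side)^2
     = b / (side * side)) by (unfold b; field; lra).
  rewrite E, Hss. lra.
Qed.
Lemma zabs_sub_comm (a b : Z) : Z.abs (a - b) = Z.abs (b - a).
Proof. rewrite <- Z.abs_opp. f_equal. ring. Qed.

Lemma cell_F (P1 P2 Q1 Q2 X1 X2 : R) (i j i2 j2 k l : Z) :
  IZR i < P1 < IZR i + 1 -> IZR j < P2 < IZR j + 1 ->
  IZR i2 < Q1 < IZR i2 + 1 -> IZR j2 < Q2 < IZR j2 + 1 ->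
  IZR k < X1 < IZR k + 1 -> IZR l < X2 < IZR l + 1 ->
  (X1-P1)*(X1-Q1)+(X2-P2)*(X2-Q2) <= 0 ->
  (Q1-P1)^2 + (Q2-P2)^2 <= 2 ->
  ((Z.min 0 (i2-i) <= k-i /\ k-i <= Z.max 0 (i2-i)) \/
   (Z.min 0 (j2-j) <= l-j /\ l-j <= Z.max 0 (j2-j)))%Z /\
  (Z.abs (k-i) <= 2 /\ Z.abs (l-j) <= 2 /\ Z.abs ((k-i)-(i2-i)) <= 2 /\ Z.abs ((l-j)-(j2-j)) <= 2)%Z /\
  ((Z.abs (k-i) < 2 \/ Z.abs (l-j) < 2) /\ (Z.abs (k-i) < 2 \/ Z.abs ((k-i)-(i2-i)) < 2) /\
   (Z.abs (k-i) < 2 \/ Z.abs ((l-j)-(j2-j)) < 2) /\ (Z.abs (l-j) < 2 \/ Z.abs ((k-i)-(i2-i)) < 2) /\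
   (Z.abs (l-j) < 2 \/ Z.abs ((l-j)-(j2-j)) < 2) /\
   (Z.abs ((k-i)-(i2-i)) < 2 \/ Z.abs ((l-j)-(j2-j)) < 2))%Z.
Proof.
  intros HP1 HP2 HQ1 HQ2 HX1 HX2 Hd HD.
  replace ((k-i)-(i2-i))%Z with (k-i2)%Z by ring.
  replace ((l-j)-(j2-j))%Z with (l-j2)%Z by ring.
  split.
  - destruct (sign1 i i2 k P1 Q1 X1 HP1 HQ1 HX1) as [?|S1]; auto.
    destruct (sign1 j j2 l P2 Q2 X2 HP2 HQ2 HX2) as [?|S2]; auto. lra.
  - pose proof (sumsq P1 P2 Q1 Q2 X1 X2 Hd).
    apply four_tri with ((X1-P1)^2) ((X2-P2)^2) ((X1-Q1)^2) ((X2-Q2)^2);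
      try apply pow2_ge_0; try lra; apply tri_of; auto.
Qed.

Lemma notX_T4 (i j i2 j2 k l : Z) : ~ in_X (i,j) (i2,j2) (k,l) ->
  ((k-i <> 0 \/ l-j <> 0) /\ (k-i <> i2-i \/ l-j <> j2-j) /\ Z.abs (k-i) + Z.abs (l-j) <> 1 /\
   Z.abs ((k-i)-(i2-i)) + Z.abs ((l-j)-(j2-j)) <> 1)%Z.
Proof.
  unfold in_X, plus_nbr. cbn [fst snd]. intros H.
  replace ((k-i)-(i2-i))%Z with (k-i2)%Z by ring.
  replace ((l-j)-(j2-j))%Z with (l-j2)%Z by ring.
  repeat split.
  - destruct (Z.eq_dec k i), (Z.eq_dec l j);
      [exfalso; apply H; left; subst; reflexivity| right; lia | left; lia | left; lia].
  - destruct (Z.eq_dec k i2), (Z.eq_dec l j2);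
      [exfalso; apply H; right; left; subst; reflexivity| right; lia | left; lia | left; lia].
  - intro E. apply H. right; right; left. rewrite (zabs_sub_comm i k), (zabs_sub_comm j l). exact E.
  - intro E. apply H. right; right; right. rewrite (zabs_sub_comm i2 k), (zabs_sub_comm j2 l). exact E.
Qed.

Lemma okP_of (P1 P2 Q1 Q2 X1 X2 : R) (i j i2 j2 k l : Z) :
  IZR i < P1 < IZR i + 1 -> IZR j < P2 < IZR j + 1 ->
  IZR i2 < Q1 < IZR i2 + 1 -> IZR j2 < Q2 < IZR j2 + 1 ->
  IZR k < X1 < IZR k + 1 -> IZR l < X2 < IZR l + 1 ->
  (X1-P1)*(X1-Q1)+(X2-P2)*(X2-Q2) <= 0 ->
  (Q1-P1)^2 + (Q2-P2)^2 <= 2 -> ~ in_X (i,j) (i2,j2) (k,l) ->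
  okP (i2-i) (j2-j) (k-i) (l-j).
Proof.
  intros. unfold okP.
  destruct (cell_F P1 P2 Q1 Q2 X1 X2 i j i2 j2 k l) as [A [B C]]; auto.
  split; [exact A|]. split; [exact B|]. split; [exact C|]. apply notX_T4; auto.
Qed.

Lemma dlP_of (P1 P2 Q1 Q2 : R) (i j i2 j2 : Z) :
  IZR i < P1 < IZR i + 1 -> IZR j < P2 < IZR j + 1 ->
  IZR i2 < Q1 < IZR i2 + 1 -> IZR j2 < Q2 < IZR j2 + 1 ->
  (Q1-P1)^2 + (Q2-P2)^2 <= 2 -> (i,j) <> (i2,j2) -> dlP (i2-i) (j2-j).
Proof.
  intros. unfold dlP.
  destruct (two_tri (Z.abs (i2-i)) (Z.abs (j2-j)) ((Q1-P1)^2) ((Q2-P2)^2)) as [A [B C]];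
    try apply pow2_ge_0; auto; try (apply tri_of; auto).
  repeat split; auto.
  destruct (Z.eq_dec i2 i), (Z.eq_dec j2 j);
    [exfalso; subst; auto| right; lia | left; lia | left; lia].
Qed.

Lemma prP_of (P1 P2 Q1 Q2 X1 X2 Y1 Y2 : R) (i j k l k' l' : Z) :
  IZR k < X1 < IZR k + 1 -> IZR l < X2 < IZR l + 1 ->
  IZR k' < Y1 < IZR k' + 1 -> IZR l' < Y2 < IZR l' + 1 ->
  (X1-P1)*(X1-Q1)+(X2-P2)*(X2-Q2) <= 0 ->
  (Y1-P1)*(Y1-Q1)+(Y2-P2)*(Y2-Q2) <= 0 ->
  (Q1-P1)^2 + (Q2-P2)^2 <= 2 -> prP (k-i) (l-j) (k'-i) (l'-j).
Proof.
  intros. unfold prP.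
  replace ((k-i)-(k'-i))%Z with (k-k')%Z by ring.
  replace ((l-j)-(l'-j))%Z with (l-l')%Z by ring.
  pose proof (pairsq P1 P2 Q1 Q2 X1 X2 Y1 Y2 H3 H4).
  apply two_tri with ((X1-Y1)^2) ((X2-Y2)^2); try apply pow2_ge_0; try lra;
    apply tri_of; auto.
Qed.

Lemma p3int (i j i2 j2 k l : Z) :
  (Z.abs (k-i) <= 1)%Z -> (Z.abs (l-j) <= 1)%Z -> (Z.abs (k-i2) <= 1)%Z -> (Z.abs (l-j2) <= 1)%Z ->
  (Z.abs (i2-i) <= 1)%Z -> (Z.abs (j2-j) <= 1)%Z -> (i,j) <> (i2,j2) ->
  in_X (i,j) (i2,j2) (k,l).
Proof.
  unfold in_X, plus_nbr. cbn [fst snd].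
  intros. rewrite (zabs_sub_comm i k), (zabs_sub_comm j l), (zabs_sub_comm i2 k), (zabs_sub_comm j2 l).
  assert (i <> i2 \/ j <> j2)%Z by (destruct (Z.eq_dec i i2), (Z.eq_dec j j2); subst; auto).
  assert (HH : ((k = i /\ l = j) \/ (k = i2 /\ l = j2) \/ Z.abs (k-i) + Z.abs (l-j) = 1 \/ Z.abs (k-i2) + Z.abs (l-j2) = 1)%Z) by lia.
  destruct HH as [[-> ->]|[[-> ->]|?]]; auto.
Qed.

Theorem lemma5 (ox oy : R) (p q : point) (cp cq : cell) :
  in_cell ox oy cp p -> in_cell ox oy cq q -> cp <> cq ->
  (pdist p q <= 1 ->
     (forall c, disk_meets ox oy p q c -> in_nbhd cp c \/ in_nbhd cq c) /\
     (forall l : list cell, NoDup l ->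
        (forall c, In c l -> disk_meets ox oy p q c /\ ~ in_X cp cq c) ->
        (length l <= 2)%nat)) /\
  (pdist p q <= 1 / sqrt 2 ->
     forall c, disk_meets ox oy p q c -> in_X cp cq c).
Proof.
  intros Hp Hq Hne.
  destruct cp as [i j], cq as [i2 j2].
  destruct (cell_n _ _ _ _ Hp) as [HP1 HP2]. destruct (cell_n _ _ _ _ Hq) as [HQ1 HQ2].
  cbn [fst snd] in HP1, HP2, HQ1, HQ2.
  assert (hit : forall c, disk_meets ox oy p q c -> exists X1 X2,
    IZR (fst c) < X1 < IZR (fst c) + 1 /\ IZR (snd c) < X2 < IZR (snd c) + 1 /\
    (X1 - (fst p - ox)/side) * (X1 - (fst q - ox)/side) +
    (X2 - (snd p - oy)/side) * (X2 - (snd q - oy)/side) <= 0).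
  { intros c [x [Hd Hc]]. destruct (cell_n _ _ _ _ Hc).
    exists ((fst x - ox)/side), ((snd x - oy)/side). split; [|split]; auto.
    apply disk_n; auto. }
  set (P1 := (fst p - ox)/side) in *. set (P2 := (snd p - oy)/side) in *.
  set (Q1 := (fst q - ox)/side) in *. set (Q2 := (snd q - oy)/side) in *.
  split.
  - intros Hd1.
    assert (HD : (Q1-P1)^2 + (Q2-P2)^2 <= 2).
    { replace 2 with (2 * (1 * 1)) by ring. apply (dist_n ox oy p q 1); auto; lra. }
    split.
    + intros [k l] Hm. destruct (hit _ Hm) as (X1 & X2 & HX1 & HX2 & Hdot).
      cbn [fst snd] in HX1, HX2.
      destruct (cell_F P1 P2 Q1 Q2 X1 X2 i j i2 j2 k l) as [_ [B C]]; auto.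
      replace ((k-i)-(i2-i))%Z with (k-i2)%Z in B, C by ring.
      replace ((l-j)-(j2-j))%Z with (l-j2)%Z in B, C by ring.
      unfold in_nbhd. cbn [fst snd].
      rewrite (zabs_sub_comm i k), (zabs_sub_comm j l), (zabs_sub_comm i2 k), (zabs_sub_comm j2 l).
      revert B C. generalize (Z.abs (k-i)) (Z.abs (l-j)) (Z.abs (k-i2)) (Z.abs (l-j2)).
      intros. lia.
    + intros lst Hnd Hall.
      destruct lst as [|c1 [|c2 [|c3 rest]]]; simpl; try lia. exfalso.
      apply NoDup_cons_iff in Hnd. destruct Hnd as [N1 Hnd].
      apply NoDup_cons_iff in Hnd. destruct Hnd as [N2 _].
      assert (D12 : c1 <> c2) by (intro E; apply N1; left; auto).
      assert (D13 : c1 <> c3) by (intro E; apply N1; right; left; auto).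
      assert (D23 : c2 <> c3) by (intro E; apply N2; left; auto).
      destruct (Hall c1 ltac:(simpl; auto)) as [M1 X1n].
      destruct (Hall c2 ltac:(simpl; auto)) as [M2 X2n].
      destruct (Hall c3 ltac:(simpl; auto)) as [M3 X3n].
      destruct c1 as [k1 l1], c2 as [k2 l2], c3 as [k3 l3].
      destruct (hit _ M1) as (A1 & B1 & HA1 & HB1 & Hd1').
      destruct (hit _ M2) as (A2 & B2 & HA2 & HB2 & Hd2').
      destruct (hit _ M3) as (A3 & B3 & HA3 & HB3 & Hd3').
      cbn [fst snd] in *.
      assert (nq_of : forall a b c d : Z, (a, b) <> (c, d) -> (a - i <> c - i \/ b - j <> d - j)%Z).
      { intros a b c d E. destruct (Z.eq_dec a c), (Z.eq_dec b d);
          [exfalso; subst; auto| right; lia | left; lia | left; lia]. }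
      apply (count_rel (i2-i) (j2-j) (k1-i) (l1-j) (k2-i) (l2-j) (k3-i) (l3-j)).
      * apply (dlP_of P1 P2 Q1 Q2); auto.
      * apply (okP_of P1 P2 Q1 Q2 A1 B1); auto.
      * apply (okP_of P1 P2 Q1 Q2 A2 B2); auto.
      * apply (okP_of P1 P2 Q1 Q2 A3 B3); auto.
      * apply (prP_of P1 P2 Q1 Q2 A1 B1 A2 B2); auto.
      * apply (prP_of P1 P2 Q1 Q2 A1 B1 A3 B3); auto.
      * apply (prP_of P1 P2 Q1 Q2 A2 B2 A3 B3); auto.
      * apply nq_of; auto.
      * apply nq_of; auto.
      * apply nq_of; auto.
  - intros Hd3.
    assert (HD : (Q1-P1)^2 + (Q2-P2)^2 <= 1).
    { replace 1 with (2 * (side * side)) by (rewrite side_sq; field).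
      pose proof side_pos. apply (dist_n ox oy p q side); auto; lra. }
    intros [k l] Hm. destruct (hit _ Hm) as (X1 & X2 & HX1 & HX2 & Hdot).
    cbn [fst snd] in HX1, HX2.
    pose proof (sumsq P1 P2 Q1 Q2 X1 X2 Hdot) as S.
    pose proof (pow2_ge_0 (X1-P1)). pose proof (pow2_ge_0 (X2-P2)).
    pose proof (pow2_ge_0 (X1-Q1)). pose proof (pow2_ge_0 (X2-Q2)).
    pose proof (pow2_ge_0 (Q1-P1)). pose proof (pow2_ge_0 (Q2-P2)).
    apply p3int; auto.
    + apply (one_tri _ ((X1-P1)^2)); [lra| apply tri_of; auto].
    + apply (one_tri _ ((X2-P2)^2)); [lra| apply tri_of; auto].
    + apply (one_tri _ ((X1-Q1)^2)); [lra| apply tri_of; auto].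
    + apply (one_tri _ ((X2-Q2)^2)); [lra| apply tri_of; auto].
    + apply (one_tri _ ((Q1-P1)^2)); [lra| apply tri_of; auto].
    + apply (one_tri _ ((Q2-P2)^2)); [lra| apply tri_of; auto].
Qed.
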